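(* Let $G$ be a graph, let $R\subseteq V(G)$ be the vertex set of an induced copy of $P_3$ in $G$, and let $C\subseteq V(G)\setminus R$ be a clique in $G$ with $m\ge 2$ vertices, each of odd degree in $G$. Assume every vertex of $R$ is adjacent to every vertex of $C$. Then one can admissibly remove from $G$ a subset of $C\cup R$ such that the remaining vertices of $C\cup R$ form a clique with at most $m-1$ vertices, each of odd degree in the remaining graph.
   Context: $P_3$ denotes the path with three edges (four vertices). Removing a set $T$ of vertices from a graph $G$ is a simple admissible removal if $T$ is an independent set in $G$ and the number of edges between $T$ and $V(G)\setminus T$ is even. Removing a set of vertices is admissible if it can be realised by a sequence of simple admissible removals, each performed in the graph remaining after the previous ones. Degrees are always taken in the current remaining graph. *)

(* Defs.v *)
(* A finite simple graph on T is a symmetric irreflexive e : rel T.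
   The "current graph" is the induced subgraph on a vertex set S : {set T}. *)
From mathcomp Require Import all_boot.
Set Implicit Arguments. Unset Strict Implicit. Unset Printing Implicit Defensive.

Section Graphs.
Variables (T : finType) (e : rel T).

Definition simple_graph : Prop := symmetric e /\ irreflexive e.

Definition deg_in (S : {set T}) (v : T) : nat := #|[set u in S | e v u]|.

Definition independent_in (S X : {set T}) : Prop :=
  X \subset S /\ forall x y, x \in X -> y \in X -> ~~ e x y.

Definition clique (X : {set T}) : Prop :=
  forall x y, x \in X -> y \in X -> x != y -> e x y.

Definition cut_edges (S X : {set T}) : nat :=
  \sum_(x in X) #|[set u in S :\: X | e x u]|.

Definition simple_admissible (S X : {set T}) : Prop :=
  independent_in S X /\ ~~ odd (cut_edges S X).

Inductive adm : {set T} -> {set T} -> Prop :=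
| adm_refl S : adm S S
| adm_step S X S' : simple_admissible S X -> adm (S :\: X) S' -> adm S S'.

Definition induced_P3 (a b c d : T) : Prop :=
  uniq [:: a; b; c; d] /\ e a b /\ e b c /\ e c d /\
  ~~ e a c /\ ~~ e a d /\ ~~ e b d.

End Graphs.

(* Main.v *)
Require Import Defs.
From mathcomp Require Import all_boot.
Set Implicit Arguments. Unset Strict Implicit. Unset Printing Implicit Defensive.

Definition adjM (i j : nat) : bool :=
  (i != j) && [|| 3 < i, 3 < j, (i == 0) && (j == 1), (i == 1) && (j == 0),
     (i == 1) && (j == 2), (i == 2) && (j == 1), (i == 2) && (j == 3) | (i == 3) && (j == 2)].
Definition parM (ps : seq bool) (i : nat) : bool := nth true ps i.
Definition curpar ps (D : seq nat) i := parM ps i (+) odd (count (adjM i) D).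
Definition stepok n ps (D X : seq nat) :=
  [&& uniq X, all (fun x => x < n) X, all (fun x => x \notin D) X,
      all (fun x => all (fun y => ~~ adjM x y) X) X &
      ~~ foldr (fun x acc => curpar ps (X ++ D) x (+) acc) false X].
Fixpoint checkplan n ps D pl := match pl with [::] => true
  | X :: pl' => stepok n ps D X && checkplan n ps (X ++ D) pl' end.
Fixpoint final (D : seq nat) pl := match pl with [::] => D | X :: pl' => final (X ++ D) pl' end.
Definition finalok n ps Dfin :=
  [&& 5 <= size Dfin, (n != 8) || ~~ odd (size Dfin),
      all (fun i => (i \in Dfin) || curpar ps Dfin i) (iota 0 n) &
      all (fun i => all (fun j => [|| i == j, i \in Dfin, j \in Dfin | adjM i j]) (iota 0 4)) (iota 0 4)].
Definition plan (n : nat) (b0 b1 b2 b3 : bool) : seq (seq nat) :=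
  match n, b0, b1, b2, b3 with
  | 6, false, false, false, false => [:: [:: 1; 3]; [:: 2]; [:: 5]; [:: 0]; [:: 4]]
  | 6, false, false, false, true => [:: [:: 2]; [:: 5]; [:: 1]; [:: 4]; [:: 3]]
  | 6, false, false, true, false => [:: [:: 1]; [:: 5]; [:: 0]; [:: 4]; [:: 3]]
  | 6, false, false, true, true => [:: [:: 1]; [:: 0; 3]; [:: 5]; [:: 2]; [:: 4]]
  | 6, false, true, false, false => [:: [:: 3]; [:: 5]; [:: 2]; [:: 4]; [:: 1]]
  | 6, false, true, false, true => [:: [:: 1; 3]; [:: 2]; [:: 5]; [:: 0]; [:: 4]]
  | 6, false, true, true, false => [:: [:: 0; 3]; [:: 2]; [:: 5]; [:: 1]; [:: 4]]
  | 6, false, true, true, true => [:: [:: 0]; [:: 5]; [:: 3]; [:: 4]; [:: 2]]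
  | 6, true, false, false, false => [:: [:: 2]; [:: 5]; [:: 1]; [:: 4]; [:: 0]]
  | 6, true, false, false, true => [:: [:: 2]; [:: 5]; [:: 1]; [:: 0; 3]; [:: 4]]
  | 6, true, false, true, false => [:: [:: 1; 3]; [:: 0]; [:: 5]; [:: 2]; [:: 4]]
  | 6, true, false, true, true => [:: [:: 1]; [:: 5]; [:: 3]; [:: 4]; [:: 0]]
  | 6, true, true, false, false => [:: [:: 3]; [:: 0; 2]; [:: 5]; [:: 1]; [:: 4]]
  | 6, true, true, false, true => [:: [:: 2]; [:: 5]; [:: 0]; [:: 4]; [:: 3]]
  | 6, true, true, true, false => [:: [:: 3]; [:: 5]; [:: 1]; [:: 4]; [:: 0]]
  | 6, true, true, true, true => [:: [:: 1; 3]; [:: 0]; [:: 5]; [:: 2]; [:: 4]]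
  | 7, false, false, false, false => [:: [:: 1; 3]; [:: 2]; [:: 6]; [:: 0]; [:: 5]]
  | 7, false, false, false, true => [:: [:: 2]; [:: 6]; [:: 1]; [:: 5]; [:: 3]; [:: 4]; [:: 0]]
  | 7, false, false, true, false => [:: [:: 1]; [:: 6]; [:: 0]; [:: 5]; [:: 3]; [:: 4]; [:: 2]]
  | 7, false, false, true, true => [:: [:: 1]; [:: 0; 3]; [:: 6]; [:: 2]; [:: 5]]
  | 7, false, true, false, false => [:: [:: 3]; [:: 6]; [:: 2]; [:: 5]; [:: 1]; [:: 4]; [:: 0]]
  | 7, false, true, false, true => [:: [:: 1; 3]; [:: 2]; [:: 6]; [:: 0]; [:: 5]]
  | 7, false, true, true, false => [:: [:: 0; 3]; [:: 2]; [:: 6]; [:: 1]; [:: 5]]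
  | 7, false, true, true, true => [:: [:: 0]; [:: 6]; [:: 3]; [:: 5]; [:: 2]; [:: 4]; [:: 1]]
  | 7, true, false, false, false => [:: [:: 2]; [:: 6]; [:: 1]; [:: 5]; [:: 0]; [:: 4]; [:: 3]]
  | 7, true, false, false, true => [:: [:: 2]; [:: 6]; [:: 1]; [:: 0; 3]; [:: 5]]
  | 7, true, false, true, false => [:: [:: 1; 3]; [:: 0]; [:: 6]; [:: 2]; [:: 5]]
  | 7, true, false, true, true => [:: [:: 1]; [:: 6]; [:: 3]; [:: 5]; [:: 0]; [:: 4]; [:: 2]]
  | 7, true, true, false, false => [:: [:: 3]; [:: 0; 2]; [:: 6]; [:: 1]; [:: 5]]
  | 7, true, true, false, true => [:: [:: 2]; [:: 6]; [:: 0]; [:: 5]; [:: 3]; [:: 4]; [:: 1]]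
  | 7, true, true, true, false => [:: [:: 3]; [:: 6]; [:: 1]; [:: 5]; [:: 0]; [:: 4]; [:: 2]]
  | 7, true, true, true, true => [:: [:: 1; 3]; [:: 0]; [:: 6]; [:: 2]; [:: 5]]
  | _, false, false, false, false => [:: [:: 1; 3]; [:: 2]; [:: 7]; [:: 0]; [:: 6]]
  | _, false, false, false, true => [:: [:: 2]; [:: 7]; [:: 1]; [:: 6]; [:: 3]; [:: 5]; [:: 0]; [:: 4]]
  | _, false, false, true, false => [:: [:: 1]; [:: 7]; [:: 0]; [:: 6]; [:: 3]; [:: 5]; [:: 2]; [:: 4]]
  | _, false, false, true, true => [:: [:: 1]; [:: 0; 3]; [:: 7]; [:: 2]; [:: 6]]
  | _, false, true, false, false => [:: [:: 3]; [:: 7]; [:: 2]; [:: 6]; [:: 1]; [:: 5]; [:: 0]; [:: 4]]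
  | _, false, true, false, true => [:: [:: 1; 3]; [:: 2]; [:: 7]; [:: 0]; [:: 6]]
  | _, false, true, true, false => [:: [:: 0; 3]; [:: 2]; [:: 7]; [:: 1]; [:: 6]]
  | _, false, true, true, true => [:: [:: 0]; [:: 7]; [:: 3]; [:: 6]; [:: 2]; [:: 5]; [:: 1]; [:: 4]]
  | _, true, false, false, false => [:: [:: 2]; [:: 7]; [:: 1]; [:: 6]; [:: 0]; [:: 5]; [:: 3]; [:: 4]]
  | _, true, false, false, true => [:: [:: 2]; [:: 7]; [:: 1]; [:: 0; 3]; [:: 6]]
  | _, true, false, true, false => [:: [:: 1; 3]; [:: 0]; [:: 7]; [:: 2]; [:: 6]]
  | _, true, false, true, true => [:: [:: 1]; [:: 7]; [:: 3]; [:: 6]; [:: 0]; [:: 5]; [:: 2]; [:: 4]]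
  | _, true, true, false, false => [:: [:: 3]; [:: 0; 2]; [:: 7]; [:: 1]; [:: 6]]
  | _, true, true, false, true => [:: [:: 2]; [:: 7]; [:: 0]; [:: 6]; [:: 3]; [:: 5]; [:: 1]; [:: 4]]
  | _, true, true, true, false => [:: [:: 3]; [:: 7]; [:: 1]; [:: 6]; [:: 0]; [:: 5]; [:: 2]; [:: 4]]
  | _, true, true, true, true => [:: [:: 1; 3]; [:: 0]; [:: 7]; [:: 2]; [:: 6]]
  end.

Lemma plan_ok n b0 b1 b2 b3 : 6 <= n <= 8 ->
  checkplan n [:: b0; b1; b2; b3] [::] (plan n b0 b1 b2 b3) &&
  finalok n [:: b0; b1; b2; b3] (final [::] (plan n b0 b1 b2 b3)).
Proof.
case: n => [|[|[|[|[|[|[|[|[|n]]]]]]]]] //= _;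
by case: b0; case: b1; case: b2; case: b3; vm_compute.
Qed.

Section Gen.
Variables (T : finType) (e : rel T).

Lemma deg_split (v : T) (D : {set T}) :
  deg_in e setT v = deg_in e (~: D) v + #|[set u in D | e v u]|.
Proof.
rewrite /deg_in -(cardsID D [set u in setT | e v u]) addnC; congr (_ + _).
  by apply: eq_card => u; rewrite !inE andbC.
by apply: eq_card => u; rewrite !inE andbC.
Qed.

Lemma card_filter_seq (s : seq T) (P : pred T) : uniq s ->
  #|[set u | (u \in s) && P u]| = count P s.
Proof.
move=> us; rewrite -size_filter.
have uf : uniq (filter P s) by rewrite filter_uniq.
rewrite -(card_uniqP uf); apply: eq_card => u; by rewrite inE mem_filter andbC.
Qed.

Variables (f : nat -> T) (n : nat) (ps : seq bool).
Hypothesis finj : forall i j, i < n -> j < n -> f i = f j -> i = j.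
Hypothesis fadj : forall i j, i < n -> j < n -> e (f i) (f j) = adjM i j.
Hypothesis fpar : forall i, i < n -> odd (deg_in e setT (f i)) = parM ps i.

Definition img (D : seq nat) : {set T} := [set x | x \in map f D].

Definition valid (D : seq nat) := uniq D && all (fun x => x < n) D.

Lemma map_uniq_valid D : valid D -> uniq (map f D).
Proof.
case/andP=> uD aD; rewrite map_inj_in_uniq // => x y xD yD.
by apply: finj; [move/allP: aD => /(_ x xD) | move/allP: aD => /(_ y yD)].
Qed.

Lemma cnt i D : i < n -> valid D ->
  #|[set u in img D | e (f i) u]| = count (adjM i) D.
Proof.
move=> ilt vD.
rewrite (eq_card (B := [set u | (u \in map f D) && e (f i) u])); last first.
  by move=> u; rewrite !inE.
rewrite card_filter_seq ?map_uniq_valid // count_map.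
apply: eq_in_count => x xD /=; apply: fadj => //.
by case/andP: vD => _ /allP /(_ x xD).
Qed.

Lemma curparP i D : i < n -> valid D ->
  odd (deg_in e (~: img D) (f i)) = curpar ps D i.
Proof.
move=> ilt vD; rewrite /curpar -fpar // (deg_split _ (img D)) cnt // oddD.
by rewrite -addbA addbb addbF.
Qed.


Lemma img_cat X D : img (X ++ D) = img X :|: img D.
Proof. by apply/setP => x; rewrite !inE map_cat mem_cat. Qed.

Lemma img_nil : img [::] = set0.
Proof. by apply/setP => x; rewrite !inE. Qed.

Lemma sum_par E Y : valid E -> all (fun x => x < n) Y ->
  odd (\sum_(i <- Y) deg_in e (~: img E) (f i)) =
  foldr (fun x acc => curpar ps E x (+) acc) false Y.
Proof.
move=> vE; elim: Y => [|y Y IH] /=; first by rewrite big_nil.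
case/andP=> yn aY; rewrite big_cons oddD IH // curparP //.
Qed.

Lemma step D X : valid D -> stepok n ps D X ->
  [/\ simple_admissible e (~: img D) (img X),
      ~: img D :\: img X = ~: img (X ++ D) & valid (X ++ D)].
Proof.
move=> vD /and5P[uX aX nD indep par].
have vXD : valid (X ++ D).
  case/andP: vD => uD aD; rewrite /valid cat_uniq uX uD all_cat aX aD /= andbT.
  rewrite andbT; apply/hasPn => x xD /=; apply/negP => xX.
  by move/allP: nD => /(_ x xX); rewrite xD.
have eqS : ~: img D :\: img X = ~: img (X ++ D).
  by apply/setP => x; rewrite img_cat !inE negb_or andbC.
split => //; split.
  split.
    apply/subsetP => x; rewrite !inE => /mapP[i iX ->]; apply/mapP => -[j jD eqf].
    have [ilt jlt] : i < n /\ j < n.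
      by split; [move/allP: aX => /(_ i iX) | case/andP: vD => _ /allP /(_ j jD)].
    move: (finj ilt jlt eqf) => ij; subst j.
    by move/allP: nD => /(_ i iX); rewrite jD.
  move=> x y; rewrite !inE => /mapP[i iX ->] /mapP[j jX ->].
  have [ilt jlt] : i < n /\ j < n.
    by split; [move/allP: aX => /(_ i iX) | move/allP: aX => /(_ j jX)].
  rewrite fadj //; by move/allP: indep => /(_ i iX) /allP /(_ j jX).
rewrite /cut_edges eqS.
have -> : \sum_(x in img X) #|[set u in ~: img (X ++ D) | e x u]| =
          \sum_(x <- map f X) deg_in e (~: img (X ++ D)) x.
  rewrite big_uniq; last by apply: map_uniq_valid; rewrite /valid uX aX.
  by apply: eq_bigl => x; rewrite inE.
by rewrite big_map sum_par.
Qed.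

Lemma plan_adm D pl : valid D -> checkplan n ps D pl ->
  adm e (~: img D) (~: img (final D pl)) /\ valid (final D pl).
Proof.
elim: pl D => [|X pl IH] D vD /=; first by split => //; constructor.
case/andP=> sX cpl; have [sa eqS vXD] := step vD sX.
have [IH1 IH2] := IH _ vXD cpl; split => //.
by apply: adm_step sa _; rewrite eqS.
Qed.


Lemma card_img D : valid D -> #|img D| = size D.
Proof.
move=> vD; rewrite -(size_map f) -(card_uniqP (map_uniq_valid vD)).
by apply: eq_card => x; rewrite inE.
Qed.

Variables (C R : {set T}) (m : nat).
Hypothesis sg : simple_graph e.
Hypothesis fin : forall i, i < n -> f i \in C :|: R.
Hypothesis Rimg : forall v, v \in R -> exists2 i, i < 4 & v = f i.
Hypothesis n4 : 4 <= n.
Hypothesis Cimg : n != 8 -> forall v, v \in C -> exists2 i, i < n & v = f i.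
Hypothesis Cdeg : forall v, v \in C -> odd (deg_in e setT v).
Hypothesis Cadj : forall v w, v \in C -> w \in C :|: R -> v != w -> e v w.
Hypothesis cardCR : #|C :|: R| = m + 4.

Lemma gen_final pl : checkplan n ps [::] pl -> finalok n ps (final [::] pl) ->
  exists S' : {set T},
    [/\ adm e [set: T] S',
        [set: T] :\: S' \subset C :|: R,
        clique e (S' :&: (C :|: R)),
        #|S' :&: (C :|: R)| <= m.-1
      & forall v, v \in S' :&: (C :|: R) -> odd (deg_in e S' v)].
Proof.
move=> cp /and4P[sz ev cpar cadj].
have [ad vD] := plan_adm (D := [::]) (erefl true) cp.
move: ad; rewrite img_nil setC0; set Dfin := final [::] pl => ad.
have inimg : forall i, i < n -> (f i \in img Dfin) = (i \in Dfin).
  move=> i ilt; rewrite inE; apply/mapP/idP => [[j jD eqf]|iD]; last by exists i.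
  have jlt : j < n by case/andP: vD => _ /allP /(_ j jD).
  by rewrite (finj ilt jlt eqf).
have imgsub : img Dfin \subset C :|: R.
  apply/subsetP => x; rewrite inE => /mapP[i iD ->]; apply: fin.
  by case/andP: vD => _ /allP /(_ i iD).
exists (~: img Dfin); split => //.
- by rewrite setTD setCK.
- move=> x y; rewrite !in_setI => /andP[xS xCR] /andP[yS yCR] xy.
  case xC: (x \in C); first by apply: Cadj.
  case yC: (y \in C).
    case: sg => sym _; rewrite sym; apply: Cadj => //; by rewrite eq_sym.
  move: xCR yCR; rewrite !in_setU xC yC /= => /Rimg[i ilt Ex] /Rimg[j jlt Ey]; subst x y.
  have iln : i < n by apply: leq_trans n4.
  have jln : j < n by apply: leq_trans n4.
  move: xS yS xy; rewrite !in_setC => xS yS ij.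
  move: xS yS; rewrite !inimg // => iD jD.
  rewrite fadj //.
  have ij' : i != j by apply: contraNneq ij => ->.
  have iI : i \in iota 0 4 by rewrite mem_iota.
  have jI : j \in iota 0 4 by rewrite mem_iota.
  have := allP cadj i iI; move/allP => /(_ j jI).
  by rewrite (negbTE ij') (negbTE iD) (negbTE jD).
- have -> : ~: img Dfin :&: (C :|: R) = (C :|: R) :\: img Dfin.
    by rewrite setIC setDE.
  rewrite cardsD (setIidPr imgsub) card_img // cardCR.
  case: m sz => [|k] sz /=; first by rewrite leqn0 subn_eq0; apply: leq_trans sz.
  by rewrite leq_subLR -addn1 -addnA addnC leq_add2r.
- move=> v; rewrite in_setI => /andP[vS vCR].
  case: (boolP [exists i : 'I_n, v == f i]) => [/existsP[i /eqP Ev]|nex].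
    subst v.
    have ilt := ltn_ord i.
    move: vS; rewrite in_setC inimg // => iD; rewrite curparP //.
    have iI : (i : nat) \in iota 0 n by rewrite mem_iota.
    by have := allP cpar i iI; rewrite (negbTE iD).
  have vC : v \in C.
    move: vCR; rewrite in_setU; case/orP => // /Rimg[i ilt ev'].
    have iln : i < n by apply: leq_trans n4.
    by case/negP: nex; apply/existsP; exists (Ordinal iln); rewrite ev'.
  have n8 : n == 8.
    apply/negPn/negP => n8; have [i ilt ev'] := Cimg n8 vC.
    by case/negP: nex; apply/existsP; exists (Ordinal ilt); rewrite ev'.
  move: ev; rewrite n8 /= => ev.
  have := Cdeg vC; rewrite (deg_split v (img Dfin)).
  have -> : [set u in img Dfin | e v u] = img Dfin.
    apply/setP => u; rewrite !inE; case uD: (u \in map f Dfin) => //=.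
    case/mapP: uD => i iD ->.
    have ilt : i < n by case/andP: vD => _ /allP /(_ i iD).
    apply: Cadj => //; first exact: fin.
    apply/eqP => evf; case/negP: nex; apply/existsP; exists (Ordinal ilt); by rewrite evf.
  by rewrite card_img // oddD (negbTE ev) addbF.
Qed.

End Gen.

Lemma adjM_big i j : 3 < j -> i != j -> adjM i j = true.
Proof. by rewrite /adjM => -> ->; rewrite orbT. Qed.

Theorem mainTheorem10 (T : finType) (e : rel T) (a b c d : T) (C : {set T}) (m : nat) :
  simple_graph e ->
  induced_P3 e a b c d ->
  [disjoint C & [set a; b; c; d]] ->
  clique e C ->
  #|C| = m -> 2 <= m ->
  (forall v, v \in C -> odd (deg_in e [set: T] v)) ->
  (forall r v, r \in [set a; b; c; d] -> v \in C -> e r v) ->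
  exists S' : {set T},
    [/\ adm e [set: T] S',
        [set: T] :\: S' \subset C :|: [set a; b; c; d],
        clique e (S' :&: (C :|: [set a; b; c; d])),
        #|S' :&: (C :|: [set a; b; c; d])| <= m.-1
      & forall v, v \in S' :&: (C :|: [set a; b; c; d]) -> odd (deg_in e S' v)].
Proof.
move=> sg [U [Eab [Ebc [Ecd [Nac [Nad Nbd]]]]]] dis cl cardC m2 Cdeg join.
set R := [set a; b; c; d].
have [sym irr] := sg.
have disj : forall x, x \in C -> x \in R -> False.
  move=> x xC xR; move/disjoint_setI0: dis => I0.
  have : x \in C :&: R by rewrite inE xC xR.
  by rewrite I0 inE.
set s := enum C.
have sizes : size s = m by rewrite -cardC cardE.
have us : uniq s := enum_uniq _.
pose f i := match i with 0 => a | 1 => b | 2 => c | 3 => d | k.+4 => nth a s k end.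
set n := 4 + minn m 4.
have nE : n = (minn m 4).+4 by [].
pose ps := [:: odd (deg_in e setT a); odd (deg_in e setT b);
               odd (deg_in e setT c); odd (deg_in e setT d)].
have fR : forall i, i < 4 -> f i \in R.
  by case=> [|[|[|[|i]]]] //= _; rewrite !inE eqxx ?orbT.
have fC : forall i, 3 < i -> i < n -> f i \in C.
  case=> [|[|[|[|k]]]] //= _ kn; rewrite -(mem_enum (mem C)) -/s mem_nth //.
  rewrite sizes; move: kn; rewrite nE !ltnS => /leq_trans; apply.
  exact: geq_minl.
have fin : forall i, i < n -> f i \in C :|: R.
  move=> i ilt; rewrite inE; case: (ltnP i 4) => i4; first by rewrite fR ?orbT.
  by rewrite fC.
have n4 : 4 <= n by rewrite /n leq_addr.
have finj : forall i j, i < n -> j < n -> f i = f j -> i = j.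
  move=> i j ilt jlt; case: (ltnP i 4) => i4; case: (ltnP j 4) => j4.
  - move: U i4 j4; rewrite /= !inE; clear ilt jlt.
    by case: i => [|[|[|[|i]]]]; case: j => [|[|[|[|j]]]] //= ;
      move=> + _ _ E; rewrite ?E ?eqxx ?orbT //= ?andbF.
  - by move=> E; exfalso; apply: (disj (f j)); [apply: fC | rewrite -E; apply: fR].
  - by move=> E; exfalso; apply: (disj (f i)); [apply: fC | rewrite E; apply: fR].
  - move: ilt jlt; case: i i4 => [|[|[|[|k]]]] //; case: j j4 => [|[|[|[|l]]]] //= _ _.
    rewrite nE !ltnS => kl ll E.
    have ks : k < size s by rewrite sizes; apply: leq_trans kl (geq_minl _ _).
    have ls : l < size s by rewrite sizes; apply: leq_trans ll (geq_minl _ _).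
    by move/eqP: E; rewrite nth_uniq // => /eqP ->.
have fadj : forall i j, i < n -> j < n -> e (f i) (f j) = adjM i j.
  have Eba : e b a by rewrite sym.
  have Ecb : e c b by rewrite sym.
  have Edc : e d c by rewrite sym.
  have Nca : e c a = false by rewrite sym (negbTE Nac).
  have Nda : e d a = false by rewrite sym (negbTE Nad).
  have Ndb : e d b = false by rewrite sym (negbTE Nbd).
  move=> i j ilt jlt; case: (ltnP i 4) => i4; case: (ltnP j 4) => j4.
  - case: i i4 {ilt} => [|[|[|[|i]]]] //; case: j j4 {jlt} => [|[|[|[|j]]]] //= _ _;
    by rewrite ?irr ?Eab ?Eba ?Ebc ?Ecb ?Ecd ?Edc ?(negbTE Nac) ?Nca ?(negbTE Nad) ?Nda
       ?(negbTE Nbd) ?Ndb.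
  - rewrite adjM_big //; last by rewrite neq_ltn (leq_trans i4 j4).
    by apply: join; [apply: fR | apply: fC].
  - rewrite /adjM i4 /= andbT neq_ltn (leq_trans j4 i4) orbT /=.
    by rewrite sym; apply: join; [apply: fR | apply: fC].
  - case: (eqVneq i j) => [<-|ij]; first by rewrite irr /adjM eqxx.
    rewrite adjM_big //; apply: cl; try by apply: fC.
    by apply: contra_neq ij; apply: finj.
have fpar : forall i, i < n -> odd (deg_in e setT (f i)) = parM ps i.
  move=> i ilt; case: (ltnP i 4) => i4.
    by case: i i4 {ilt} => [|[|[|[|i]]]].
  by rewrite /parM nth_default // Cdeg // fC.
have Rimg : forall v, v \in R -> exists2 i, i < 4 & v = f i.
  move=> v; rewrite !inE -!orbA; case/or4P => /eqP ->; by [exists 0|exists 1|exists 2|exists 3].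
have Cimg : n != 8 -> forall v, v \in C -> exists2 i, i < n & v = f i.
  move=> n8 v vC.
  have mlt : m < 4.
    rewrite ltnNge; apply/negP => m4; move: n8; rewrite /n.
    by move/minn_idPr: m4 => ->.
  have vs : v \in s by rewrite mem_enum.
  exists (index v s).+4; last by rewrite /= nth_index.
  by rewrite nE (minn_idPl (ltnW mlt)) !ltnS -sizes index_mem.
have Cadj : forall v w, v \in C -> w \in C :|: R -> v != w -> e v w.
  move=> v w vC; rewrite inE => /orP[wC|wR] vw; first exact: cl.
  by rewrite sym; apply: join.
have cardCR : #|C :|: R| = m + 4.
  rewrite cardsU; move/disjoint_setI0: dis => ->; rewrite cards0 subn0 cardC.
  congr (_ + _); transitivity (size [:: a; b; c; d]) => //; rewrite -(card_uniqP U). apply: eq_card; move=> x; by rewrite /R !inE -!orbA.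
have n68 : 6 <= n <= 8.
  rewrite nE; apply/andP; split; rewrite !ltnS; last by rewrite geq_minr.
  by rewrite leq_min m2.
have := plan_ok (odd (deg_in e setT a)) (odd (deg_in e setT b))
   (odd (deg_in e setT c)) (odd (deg_in e setT d)) n68.
case/andP => cp fo.
exact: (gen_final finj fadj fpar sg fin Rimg n4 Cimg Cdeg Cadj cardCR cp fo).
Qed.
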